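(* Let $R=R_1\times\cdots\times R_t$ be a direct product of finite (not necessarily local) Frobenius rings, and let $\omega_i$ be the normalized homogeneous weight on $R_i$. Then the normalized homogeneous weight $\omega$ on $R$ satisfies $$\omega(a_1,\dots,a_t)=1-\prod_{i=1}^t\bigl(1-\omega_i(a_i)\bigr)\quad\text{for all }(a_1,\dots,a_t)\in R.$$
   Context: A finite ring $R$ (with $1$) is Frobenius if it admits a generating character, i.e. a character $\chi$ of $(R,+)$ such that $r\mapsto r\cdot\chi$, $(r\cdot\chi)(x)=\chi(xr)$, is a bijection $R\to\widehat R$; direct products of Frobenius rings are Frobenius. The normalized homogeneous weight on a finite Frobenius ring $S$ is the unique function $\omega:S\to\mathbb Q$ with $\omega(0)=0$, $\omega(x)=\omega(y)$ whenever $Sx=Sy$, and $\sum_{y\in Sx}\omega(y)=|Sx|$ for all $x\neq0$; it is known that $\omega(r)=1-\frac1{|S^*|}\sum_{u\in S^*}\chi(ru)$ for any generating character $\chi$ of $S$, where $S^*$ is the unit group. *)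

(* Defs.v *)
From HB Require Import structures.
From mathcomp Require Import all_boot all_order all_algebra all_field.
Set Implicit Arguments. Unset Strict Implicit. Unset Printing Implicit Defensive.
Import Order.TTheory GRing.Theory Num.Theory.
Local Open Scope ring_scope.

Section ProdRing.
Variables (t : nat) (R : 'I_t -> finPzRingType).

Definition prodRing := {dffun forall i : 'I_t, R i}.
HB.instance Definition _ := Finite.copy prodRing {dffun forall i : 'I_t, R i}.

Definition pr_zero : prodRing := [ffun i => 0].
Definition pr_opp (a : prodRing) : prodRing := [ffun i => - a i].
Definition pr_add (a b : prodRing) : prodRing := [ffun i => a i + b i].
Definition pr_one : prodRing := [ffun i => 1].
Definition pr_mul (a b : prodRing) : prodRing := [ffun i => a i * b i].

Fact pr_addA : associative pr_add.
Proof. by move=> a b c; apply/ffunP=> i; rewrite !ffunE addrA. Qed.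
Fact pr_addC : commutative pr_add.
Proof. by move=> a b; apply/ffunP=> i; rewrite !ffunE addrC. Qed.
Fact pr_add0 : left_id pr_zero pr_add.
Proof. by move=> a; apply/ffunP=> i; rewrite !ffunE add0r. Qed.
Fact pr_addN : left_inverse pr_zero pr_opp pr_add.
Proof. by move=> a; apply/ffunP=> i; rewrite !ffunE addNr. Qed.

HB.instance Definition _ :=
  GRing.isZmodule.Build prodRing pr_addA pr_addC pr_add0 pr_addN.

Fact pr_mulA : associative pr_mul.
Proof. by move=> a b c; apply/ffunP=> i; rewrite !ffunE mulrA. Qed.
Fact pr_mul1 : left_id pr_one pr_mul.
Proof. by move=> a; apply/ffunP=> i; rewrite !ffunE mul1r. Qed.
Fact pr_mulr1 : right_id pr_one pr_mul.
Proof. by move=> a; apply/ffunP=> i; rewrite !ffunE mulr1. Qed.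
Fact pr_mulDl : left_distributive pr_mul +%R.
Proof. by move=> a b c; apply/ffunP=> i; rewrite !ffunE mulrDl. Qed.
Fact pr_mulDr : right_distributive pr_mul +%R.
Proof. by move=> a b c; apply/ffunP=> i; rewrite !ffunE mulrDr. Qed.

HB.instance Definition _ :=
  GRing.Zmodule_isPzRing.Build prodRing pr_mulA pr_mul1 pr_mulr1 pr_mulDl pr_mulDr.

End ProdRing.

Lemma prodRingE t (R : 'I_t -> finPzRingType) (a b : prodRing R) i :
  ((a + b) i = a i + b i) * ((a * b) i = a i * b i) * ((0 : prodRing R) i = 0)
  * ((1 : prodRing R) i = 1).
Proof. by rewrite !ffunE. Qed.

Definition additive_character (S : finPzRingType) (chi : S -> algC) : Prop :=
  chi 0 = 1 /\ forall x y, chi (x + y) = chi x * chi y.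

(* chi is generating: r |-> r.chi, (r.chi)(x) = chi (x r), is a bijection
   from S onto the character group of (S,+). *)
Definition generating_character (S : finPzRingType) (chi : S -> algC) : Prop :=
  [/\ additive_character chi,
      (forall r r' : S, (forall x, chi (x * r) = chi (x * r')) -> r = r')
    & (forall psi : S -> algC, additive_character psi ->
         exists r : S, forall x, psi x = chi (x * r))].

Definition Frobenius_ring (S : finPzRingType) : Prop :=
  exists chi : S -> algC, generating_character chi.

Definition lideal (S : finPzRingType) (x : S) : {set S} := [set s * x | s : S].

Definition normalized_homogeneous_weight (S : finPzRingType) (w : S -> rat) : Prop :=
  [/\ w 0 = 0,
      (forall x y : S, lideal x = lideal y -> w x = w y)
    & (forall x : S, x != 0 -> \sum_(y in lideal x) w y = (#|lideal x|)%:R)].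

(* Main.v *)
Require Import Defs.
From HB Require Import structures.
From mathcomp Require Import all_boot all_order all_algebra all_field.
Import GRing.Theory Num.Theory.
Set Implicit Arguments. Unset Strict Implicit.
Local Open Scope ring_scope.

Lemma mem_lideal (S : finPzRingType) (x : S) : x \in lideal x.
Proof. by apply/imsetP; exists 1 => //; rewrite mul1r. Qed.

Lemma lidealP (S : finPzRingType) (x y : S) :
  reflect (exists s, y = s * x) (y \in lideal x).
Proof.
apply: (iffP imsetP) => [[s _ ->]|[s ->]]; by exists s.
Qed.

Lemma lideal_sub (S : finPzRingType) (x y : S) :
  y \in lideal x -> lideal y \subset lideal x.
Proof.
move=> /lidealP [s ->]; apply/subsetP => z /lidealP [r ->].
by apply/lidealP; exists (r * s); rewrite mulrA.
Qed.

Lemma nhw_unique (S : finPzRingType) (w w' : S -> rat) :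
  normalized_homogeneous_weight w -> normalized_homogeneous_weight w' ->
  forall x, w x = w' x.
Proof.
case=> w0 wc ws [w'0 w'c w's].
suff H : forall n x, (#|lideal x| <= n)%N -> w x = w' x by move=> x; exact: (H _ x (leqnn _)).
elim=> [|n IH] x.
  by rewrite leqn0 => /eqP/card0_eq/(_ x); rewrite mem_lideal.
move=> Hn; have [->|nx0] := eqVneq x 0; first by rewrite w0 w'0.
have := ws x nx0; rewrite -(w's x nx0).
rewrite (bigID (fun y => lideal y == lideal x)) /=.
rewrite [in RHS](bigID (fun y => lideal y == lideal x)) /=.
rewrite [X in X + _ = _](eq_bigr (fun=> w x)); last by move=> y /andP[_ /eqP /wc].
rewrite [X in _ = X + _](eq_bigr (fun=> w' x)); last by move=> y /andP[_ /eqP /w'c].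
rewrite [X in _ + X = _](eq_bigr (fun y => w' y)); last first.
  move=> y /andP[yL ne]; apply: IH; rewrite -ltnS; apply: leq_trans Hn.
  apply: proper_card; rewrite properEneq ne lideal_sub //.
move/addIr; rewrite !sumr_const.
set m := #|_|.
have m0 : (m%:R : rat) != 0.
  rewrite pnatr_eq0 -lt0n; apply/card_gt0P; exists x.
  by rewrite unfold_in /= mem_lideal eqxx.
rewrite -mulr_natr -[w' x *+ _]mulr_natr => /(congr1 (fun z => z / m%:R)); by rewrite !mulfK.
Qed.

Lemma prmulE t (R : 'I_t -> finPzRingType) (a b : prodRing R) i :
  (a * b) i = a i * b i.
Proof. exact: (prodRingE a b i).1.1.2. Qed.

Lemma pr0E t (R : 'I_t -> finPzRingType) i : (0 : prodRing R) i = 0.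
Proof. exact: (prodRingE 0 0 i).1.2. Qed.

Definition upd t (R : 'I_t -> finPzRingType) (y : prodRing R) (k : 'I_t) (c : R k)
  : prodRing R := finfun (@dfwith _ (fun i : 'I_t => R i : Type) (fun j : 'I_t => fun_of_fin y j) k c).

Lemma upd_in t (R : 'I_t -> finPzRingType) (y : prodRing R) k (c : R k) :
  upd y c k = c.
Proof. by rewrite /upd ffunE dfwith_in. Qed.

Lemma upd_out t (R : 'I_t -> finPzRingType) (y : prodRing R) k (c : R k) j :
  k != j -> upd y c j = y j.
Proof. by move=> kj; rewrite /upd ffunE dfwith_out. Qed.

Lemma upd_upd t (R : 'I_t -> finPzRingType) (y : prodRing R) k (c d : R k) :
  upd (upd y c) d = upd y d.
Proof.
apply/ffunP=> j; have [<-|kj] := eqVneq k j; first by rewrite !upd_in.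
by rewrite !upd_out.
Qed.

Lemma upd_eq t (R : 'I_t -> finPzRingType) (y : prodRing R) k (c : R k) :
  (upd y c == y) = (y k == c).
Proof.
apply/eqP/eqP => [<-|yc]; first by rewrite upd_in.
apply/ffunP=> j; have [<-|kj] := eqVneq k j; first by rewrite upd_in.
by rewrite upd_out.
Qed.

Lemma upd_mem t (R : 'I_t -> finPzRingType) (a y : prodRing R) k (c : R k) :
  y \in lideal a -> c \in lideal (a k) -> upd y c \in lideal a.
Proof.
move=> /lidealP [s ->] /lidealP [r ->]; apply/lidealP; exists (upd s r).
apply/ffunP=> j. have := prmulE (upd s r) a j. move=> ->.
have [<-|kj] := eqVneq k j; first by rewrite !upd_in.
by rewrite !upd_out // prmulE.
Qed.

Lemma sum_prod0 t (R : 'I_t -> finPzRingType) (a : prodRing R) (k : 'I_t)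
  (g : forall i, R i -> rat) :
  \sum_(c in lideal (a k)) g k c = 0 ->
  \sum_(y in lideal a) \prod_(i < t) g i (y i) = 0.
Proof.
move=> gk0.
pose S (c : R k) := \sum_(y | (y \in lideal a) && (y k == c))
   \prod_(i < t | i != k) g i (y i).
have Sc : forall c, c \in lideal (a k) -> S c = S 0.
  move=> c cL; rewrite /S.
  rewrite (reindex_onto (fun y : prodRing R => upd y c) (fun y : prodRing R => upd y (0 : R k))); last first.
    move=> y /andP[_ /eqP <-]; by rewrite upd_upd; apply/eqP; rewrite upd_eq.
  rewrite (eq_bigl (fun j => (j \in lideal a) && (j k == 0))); last first.
    move=> y /=.
    rewrite upd_in eqxx andbT upd_upd upd_eq.
    have [y0|] := eqVneq (y k) 0; rewrite ?andbF ?andbT //.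
    apply/idP/idP => yL; last exact: upd_mem.
    have <- : upd (upd y c) (0 : R k) = y by rewrite upd_upd; apply/eqP; rewrite upd_eq y0.

    apply: upd_mem => //; apply/lidealP; exists 0; by rewrite mul0r.
  rewrite (eq_bigr (fun j : prodRing R => \prod_(i < t | i != k) g i (j i))) //.
  move=> y _; apply: eq_bigr => i ik; rewrite upd_out //; by rewrite eq_sym.
rewrite (partition_big (fun y : prodRing R => y k) (mem (lideal (a k)))) /=; last first.
  by move=> y /lidealP [s ->]; apply/lidealP; exists (s k); rewrite prmulE.
rewrite (eq_bigr (fun c => g k c * S 0)); first by rewrite -mulr_suml gk0 mul0r.
move=> c cL; rewrite -(Sc c cL) /S mulr_sumr; apply: eq_bigr => y /andP[_ /eqP yk].
by rewrite (bigD1 k) //= yk.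
Qed.

Lemma lideal_comp t (R : 'I_t -> finPzRingType) (x y : prodRing R) i :
  lideal x = lideal y -> lideal (x i) = lideal (y i).
Proof.
have H : forall u v : prodRing R, v \in lideal u -> lideal (v i) \subset lideal (u i).
  move=> u v /lidealP [s ->]; apply: lideal_sub; apply/lidealP; exists (s i).
  by rewrite prmulE.
move=> Lxy; apply/eqP; rewrite eqEsubset; apply/andP; split; apply: H.
  by rewrite -Lxy mem_lideal.
by rewrite Lxy mem_lideal.
Qed.

Unset Implicit Arguments.

Theorem proposition3p7 (t : nat) (R : 'I_t -> finPzRingType)
    (w : forall i : 'I_t, R i -> rat) (wR : prodRing R -> rat) :
  (forall i, Frobenius_ring (R i)) ->
  (forall i, normalized_homogeneous_weight (w i)) ->
  normalized_homogeneous_weight wR ->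
  forall a : prodRing R, wR a = 1 - \prod_(i < t) (1 - w i (a i)).
Proof.
move=> _ Hw HwR a.
pose f (b : prodRing R) := 1 - \prod_(i < t) (1 - w i (b i)).
suff Hf : normalized_homogeneous_weight f by exact: nhw_unique HwR Hf a.
split.
- rewrite /f big1 ?subrr // => i _; rewrite pr0E; by case: (Hw i) => -> _ _; rewrite subr0.
- move=> x y Lxy; rewrite /f; congr (1 - _); apply: eq_bigr => i _.
  by case: (Hw i) => _ wc _; rewrite (wc _ _ (lideal_comp i Lxy)).
- move=> x x0.
  have : [exists k, x k != 0].
    apply: contraNT x0; rewrite negb_exists => /forallP H; apply/eqP/ffunP => i.
    rewrite pr0E; exact/eqP/negPn/H.
  case/existsP => k xk.
  rewrite /f sumrB sumr_const (sum_prod0 (k:=k) (g := fun i c => 1 - w i c)) ?subr0 //.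
  rewrite sumrB sumr_const; case: (Hw k) => _ _ ->//; by rewrite subrr.
Qed.
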